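(* Let $n\ge 1$ and, for each $j\in\{1,\dots,n\}$, let $(P_j(k))_{k\in\mathbb{N}_0}$ be a probability distribution on the nonnegative integers (the degree distribution of the contact tree $\mathcal{T}_j$) with finite mean $\mathbb{E}(k_j)=\sum_k kP_j(k)$ and finite standard deviation $\sigma(k_j)=\sqrt{\mathbb{E}(k_j^2)-\mathbb{E}(k_j)^2}$, and assume $\sum_{l=1}^n\mathbb{E}(k_l)>0$. Let $T_j\in[0,1]$ be the probability of transmitting the disease along an edge of $\mathcal{T}_j$, and suppose a fraction $Q\in[0,1]$ of all infected individuals is completely isolated and transmits to no one. Then the basic reproduction number $R_0$ (defined in the context) equals $$R_0=(1-Q)\sum_{j=1}^n T_j\left(\mathbb{E}(k_j)\left(1-\frac{1}{\sum_{l=1}^n\mathbb{E}(k_l)}\right)+\frac{\sigma(k_j)^2}{\sum_{l=1}^n\mathbb{E}(k_l)}\right).$$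
   Context: Model: a population's contacts are split into $n$ types; a randomly chosen individual has $k_i$ contacts of type $i$ with probability $\prod_i P_i(k_i)$ (independent types). The ramification distribution (number of further contacts of each type of an individual reached by following a randomly chosen contact) is $$\tilde P(k_1,\dots,k_n)=\frac{\sum_{l=1}^n (k_l+1)P_l(k_l+1)\prod_{i\neq l}P_i(k_i)}{\sum_{l=1}^n\mathbb{E}(k_l)}.$$ For an individual with ramification $(k_1,\dots,k_n)$, the expected number of individuals it infects is $$a_{k_1\dots k_n}=(1-Q)\sum_{m_1=0}^{k_1}\cdots\sum_{m_n=0}^{k_n}(m_1+\dots+m_n)\prod_{i=1}^n\binom{k_i}{m_i}T_i^{m_i}(1-T_i)^{k_i-m_i},$$ and the basic reproduction number is $R_0=\sum_{k_1,\dots,k_n\ge0}\tilde P(k_1,\dots,k_n)\,a_{k_1\dots k_n}$. *)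

(* Defs.v *)
From HB Require Import structures.
From mathcomp Require Import all_boot all_order all_algebra.
From mathcomp Require Import all_classical all_reals.
From mathcomp Require Import ereal topology normedtype sequences esum.
Set Implicit Arguments. Unset Strict Implicit. Unset Printing Implicit Defensive.
Import Order.TTheory GRing.Theory Num.Theory.
Local Open Scope ring_scope.
Local Open Scope ereal_scope.

Section Defs.
Variable R : realType.

(* E(k) = sum_k k P(k), as a real number (meaningful when finite) *)
Definition mean (P : nat -> R) : R :=
  fine (\esum_(k in [set: nat]) ((k%:R * P k)%R)%:E).

Definition second_moment (P : nat -> R) : R :=
  fine (\esum_(k in [set: nat]) ((k%:R ^+ 2 * P k)%R)%:E).

Definition stdev (P : nat -> R) : R :=
  Num.sqrt (second_moment P - mean P ^+ 2)%R.

Variable n : nat.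

Definition ramif (P : 'I_n -> nat -> R) (k : {ffun 'I_n -> nat}) : R :=
  ((\sum_(l < n) (k l).+1%:R * P l (k l).+1 * \prod_(i < n | i != l) P i (k i))
   / \sum_(l < n) mean (P l))%R.

(* a_{k_1...k_n}: the nested sums over 0 <= m_i <= k_i are written as one sum
   over m : 'I_n -> 'I_(K+1) with K = max_i k_i, restricted to m_i <= k_i. *)
Definition infected (T : 'I_n -> R) (Q : R) (k : {ffun 'I_n -> nat}) : R :=
  ((1 - Q) *
   \sum_(m : {ffun 'I_n -> 'I_(\max_(i < n) k i).+1} | [forall i, (m i <= k i)%N])
     ((\sum_(i < n) (m i : nat))%:R *
      \prod_(i < n) ('C(k i, m i)%:R * T i ^+ m i * (1 - T i) ^+ (k i - m i))))%R.

Definition R0 (P : 'I_n -> nat -> R) (T : 'I_n -> R) (Q : R) : \bar R :=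
  \esum_(k in [set: {ffun 'I_n -> nat}]) (ramif P k * infected T Q k)%:E.

End Defs.

(* Main.v *)
Require Import Defs.
From HB Require Import structures.
From mathcomp Require Import all_boot all_order all_algebra.
From mathcomp Require Import all_classical all_reals.
From mathcomp Require Import ereal topology normedtype sequences esum.
From mathcomp Require Import ring lra.
Import Order.TTheory GRing.Theory Num.Theory.
Local Open Scope ring_scope.
Local Open Scope ereal_scope.

Lemma esumZl (R : realType) (T : choiceType) (I : set T) (a : T -> \bar R) (c : R) :
  (0 <= c)%R -> (forall i, I i -> 0 <= a i) ->
  \esum_(i in I) (c%:E * a i) = c%:E * \esum_(i in I) a i.
Proof.
move=> c0 a0; rewrite /esum -ereal_supZl//; last first.
  by apply/set0P; exists 0; exists set0; [exact: fsets_set0|rewrite fsbig_set0].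
rewrite image_comp; congr ereal_sup; apply: eq_imagel => X [finX XI] /=.
rewrite !fsbig_finite// [in RHS]big_seq ge0_sume_distrr => [|i].
  by rewrite -big_seq.
by rewrite in_fset_set// inE => /XI/a0.
Qed.

Lemma esum_prod (R : realType) n (f : 'I_n -> nat -> R) (s : 'I_n -> R) :
  (forall i k, 0 <= f i k)%R ->
  (forall i, \esum_(k in [set: nat]) (f i k)%:E = (s i)%:E) ->
  \esum_(k in [set: {ffun 'I_n -> nat}]) (\prod_i f i (k i))%:E = (\prod_i s i)%:E.
Proof.
elim: n f s => [|n IH] f s f0 fs.
  have -> : [set: {ffun 'I_0 -> nat}]%classic = [set [ffun i => 0%N]]%classic.
    apply/seteqP; split => k //= _; apply/ffunP => -[]//.
  by rewrite esum_set1 !big_ord0// lee_fin.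
pose e (p : nat * {ffun 'I_n -> nat}) : {ffun 'I_n.+1 -> nat} :=
  [ffun i => if unlift ord0 i is Some j then p.2 j else p.1].
rewrite (reindex_esum setT setT e); last first.
  split.
  - by [].
  - move=> [x g] [y h] _ _ /ffunP E; have := E ord0; rewrite !ffunE unlift_none /= => ->.
    congr pair; apply/ffunP => j; have := E (lift ord0 j); by rewrite !ffunE liftK.
  - move=> k _; exists (k ord0, [ffun j => k (lift ord0 j)]) => //.
    apply/ffunP => i; rewrite ffunE; case: unliftP => [j ->|->]; by rewrite ?ffunE.
have -> : [set: nat * {ffun 'I_n -> nat}]%classic = ([set: nat] `*`` (fun=> [set: {ffun 'I_n -> nat}]))%classic.
  by apply/seteqP; split.
rewrite (eq_esum (b := fun k => (fun x g => (\prod_i f i (e (x, g) i))%:E) k.1 k.2));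
  last by move=> -[x g].
rewrite -(@esum_esum _ _ _ setT (fun=> setT) (fun x g => (\prod_i f i (e (x, g) i))%:E)); last by move=> *; rewrite lee_fin prodr_ge0.
under eq_esum => x _.
  under eq_esum => g _ do
    rewrite big_ord_recl ffunE unlift_none /= EFinM.
  rewrite esumZl //; last by move=> *; rewrite lee_fin prodr_ge0.
  under eq_esum => g _ do under eq_bigr => j _ do rewrite ffunE liftK /=.
  rewrite (IH (fun j => f (lift ord0 j)) (fun j => s (lift ord0 j))) //.
  rewrite muleC.
  over.
rewrite /= esumZl; last by move=> *; rewrite lee_fin.
rewrite fs -EFinM big_ord_recl mulrC //.
apply: prodr_ge0 => i _; rewrite -lee_fin -fs esum_ge0 // => *; exact: f0.
Qed.

Lemma esum_shift (R : realType) (h : nat -> \bar R) :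
  (forall k, 0 <= h k) -> h 0%N = 0 ->
  \esum_(k in [set: nat]) h k.+1 = \esum_(k in [set: nat]) h k.
Proof.
move=> h0 h00.
rewrite [RHS](esumID [set 0%N]) // setTI esum_set1 // h00 add0e.
rewrite (reindex_esum setT (setT `&` ~` [set 0%N])%classic succn) //.
split.
- by move=> k _; split.
- by move=> x y _ _ [].
- move=> y [_ /= y0]; exists y.-1 => //=; rewrite prednK // lt0n; exact/eqP.
Qed.

Section Binom.
Local Open Scope ring_scope.
Variable R : comRingType.

Lemma binom_sum1 (t : R) k :
  \sum_(x < k.+1) 'C(k, x)%:R * t ^+ x * (1 - t) ^+ (k - x) = 1.
Proof.
have := exprDn (1 - t) t k; rewrite subrK expr1n => E; rewrite [RHS]E.
apply: eq_bigr => i _; rewrite -mulr_natl; ring.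
Qed.

Lemma binom_sum_mean (t : R) k :
  \sum_(x < k.+1) x%:R * ('C(k, x)%:R * t ^+ x * (1 - t) ^+ (k - x)) = k%:R * t.
Proof.
case: k => [|k]; first by rewrite big_ord_recl big_ord0 !mul0r addr0.
rewrite big_ord_recl mul0r add0r.
rewrite (eq_bigr (fun x : 'I_k.+1 => (k.+1%:R * t) * ('C(k, x)%:R * t ^+ x * (1 - t) ^+ (k - x)))); last first.
  move=> x _; rewrite lift0 subSS !mulrA -natrM -mul_bin_diag natrM exprS /=; ring.
by rewrite -big_distrr /= binom_sum1 mulr1.
Qed.

Lemma binom_widen (F : nat -> R) k N : (k <= N)%N -> (forall x, (k < x)%N -> F x = 0) ->
  \sum_(x < N.+1) F x = \sum_(x < k.+1) F x.
Proof.
move=> kN F0; rewrite -!(big_mkord xpredT) (big_cat_nat _ (n := k.+1)) //=.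
rewrite [X in _ + X = _]big_nat_cond [X in _ + X = _]big1 ?addr0 // => x /andP[/andP[kx _] _]; exact: F0.
Qed.
End Binom.

Lemma infectedE (R : realType) n (T : 'I_n -> R) (Q : R) (k : {ffun 'I_n -> nat}) :
  infected T Q k = ((1 - Q) * \sum_(j < n) T j * (k j)%:R)%R.
Proof.
rewrite /infected; congr (_ * _)%R.
set K := \max_(i < n) k i.
have kK i : (k i <= K)%N by exact: leq_bigmax.
pose b i (x : nat) : R := ('C(k i, x)%:R * T i ^+ x * (1 - T i) ^+ (k i - x))%R.
have bz i x : (k i < x)%N -> b i x = 0%R by move=> ?; rewrite /b bin_small // !mul0r.
rewrite big_mkcond /=.
rewrite (eq_bigr (fun m : {ffun 'I_n -> 'I_K.+1} => \sum_(j < n) \prod_(i < n)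
   ((if i == j then (m i : nat)%:R else 1) * b i (m i)))%R); last first.
  move=> m _; case: ifP => [_|/negbT/forallPn[i Hi]].
    rewrite natr_sum mulr_suml; apply: eq_bigr => j _.
    by rewrite [RHS]big_split /= -big_mkcond big_pred1_eq.
  symmetry; apply: big1 => j _; rewrite (bigD1 i) //= bz ?mulr0 ?mul0r //.
  by rewrite ltnNge.
rewrite exchange_big /=; apply: eq_bigr => j _.
rewrite -(bigA_distr_bigA (fun i (x : 'I_K.+1) => (if i == j then (x : nat)%:R else 1) * b i x)%R) /=.
rewrite (bigD1 j) //= eqxx [X in (_ * X)%R]big1 => [|i ij]; last first.
  rewrite (negPf ij); under eq_bigr do rewrite mul1r.
  rewrite (@binom_widen R (b i) _ _ (kK i)) //; last exact: bz.
  rewrite /b; exact: binom_sum1.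
apply: etrans; first exact: mulr1.
rewrite (@binom_widen R (fun x => x%:R * b j x)%R _ _ (kK j)) //.
  by rewrite binom_sum_mean mulrC.
by move=> x /bz ->; rewrite mulr0.
Qed.

Section Moments.
Variable R : realType.
Variable P : nat -> R.
Hypothesis P0 : forall k, (0 <= P k)%R.
Hypothesis P1 : \esum_(k in [set: nat]) (P k)%:E = 1.
Hypothesis Pm : \esum_(k in [set: nat]) ((k%:R * P k)%R)%:E < +oo.
Hypothesis Ps : \esum_(k in [set: nat]) ((k%:R ^+ 2 * P k)%R)%:E < +oo.

Lemma meanE : \esum_(k in [set: nat]) ((k%:R * P k)%R)%:E = (mean P)%:E.
Proof.
rewrite /mean fineK // ge0_fin_numE // esum_ge0 // => k _.
by rewrite lee_fin mulr_ge0.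
Qed.

Lemma smE : \esum_(k in [set: nat]) ((k%:R ^+ 2 * P k)%R)%:E = (second_moment P)%:E.
Proof.
rewrite /second_moment fineK // ge0_fin_numE // esum_ge0 // => k _.
by rewrite lee_fin mulr_ge0 // sqr_ge0.
Qed.

Lemma mean_ge0 : (0 <= mean P)%R.
Proof. by rewrite -lee_fin -meanE esum_ge0 // => k _; rewrite lee_fin mulr_ge0. Qed.

Lemma shift1 : \esum_(k in [set: nat]) (((k.+1)%:R * P k.+1)%R)%:E = (mean P)%:E.
Proof.
rewrite -meanE (@esum_shift R (fun k => ((k%:R * P k)%R)%:E)) //.
- by move=> k; rewrite lee_fin mulr_ge0.
- by rewrite mul0r.
Qed.

Lemma shift2 : \esum_(k in [set: nat]) (((k.+1)%:R * P k.+1 * k%:R)%R)%:E =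
  (second_moment P - mean P)%:E.
Proof.
have H : \esum_(k in [set: nat]) (((k.+1)%:R * P k.+1 * k%:R)%R)%:E + (mean P)%:E =
   (second_moment P)%:E.
  rewrite -shift1 -esumD; last 2 first.
  - by move=> k _; rewrite lee_fin !mulr_ge0.
  - by move=> k _; rewrite lee_fin !mulr_ge0.
  rewrite -smE -(@esum_shift R (fun k => ((k%:R ^+ 2 * P k)%R)%:E)); last 2 first.
  - by move=> k; rewrite lee_fin mulr_ge0 // sqr_ge0.
  - by rewrite expr0n mul0r.
  apply: eq_esum => k _; rewrite -EFinD; congr (_%:E).
  rewrite -natr1; ring.
move: H; set a := esum _ _.
have : 0 <= a by rewrite esum_ge0 // => k _; rewrite lee_fin !mulr_ge0.
case: a => [r _ /= /eqP|//|//].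
by rewrite -EFinD eqe => /eqP <-; rewrite addrK.
Qed.

Lemma var_ge0 : (0 <= second_moment P - mean P ^+ 2)%R.
Proof.
set E := mean P.
have E0 : (0 <= E)%R := mean_ge0.
have H1 : \esum_(k in [set: nat]) ((k%:R ^+ 2 * P k + E ^+ 2 * P k)%R)%:E =
    (second_moment P + E ^+ 2)%:E.
  under eq_esum do rewrite EFinD !EFinM.
  rewrite esumD; last 2 first.
  - by move=> k _; rewrite -EFinM lee_fin mulr_ge0 // sqr_ge0.
  - by move=> k _; rewrite -EFinM lee_fin mulr_ge0 // sqr_ge0.
  rewrite esumZl; last by move=> *; rewrite lee_fin.
  - by rewrite P1 mule1 (eq_esum (b := fun k => ((k%:R ^+ 2 * P k)%R)%:E)) ?smE // => k _; rewrite EFinM.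
  - exact: sqr_ge0.
have H2 : ((2 * E * E)%R)%:E <= \esum_(k in [set: nat]) ((k%:R ^+ 2 * P k + E ^+ 2 * P k)%R)%:E.
  rewrite EFinM /E -meanE -/E -esumZl; last 2 first.
  - by rewrite mulr_ge0.
  - by move=> k _; rewrite lee_fin mulr_ge0.
  apply: le_esum => k _; rewrite -EFinM lee_fin.
  have : (0 <= (k%:R - E) ^+ 2 * P k)%R by rewrite mulr_ge0 // sqr_ge0.
  move=> h; nra.
move: H2; rewrite H1 lee_fin => H2; nra.
Qed.

End Moments.

Section Main.
Variable R : realType.
Variable n : nat.
Variable P : 'I_n -> nat -> R.
Local Open Scope ring_scope.

Definition g (l j i : 'I_n) (x : nat) : R :=
  (if i == l then (x.+1)%:R * P i x.+1 else P i x) * (if i == j then x%:R else 1).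

Definition s (l j i : 'I_n) : R :=
  if i == l then (if i == j then second_moment (P i) - mean (P i) else mean (P i))
  else (if i == j then mean (P i) else 1).

Lemma prod_g l j (k : {ffun 'I_n -> nat}) :
  \prod_i g l j i (k i) =
  ((k l).+1%:R * P l (k l).+1 * \prod_(i < n | i != l) P i (k i)) * (k j)%:R.
Proof.
rewrite big_split /= -[X in _ * X]big_mkcond big_pred1_eq (bigD1 l) //= eqxx.
by congr (_ * _ * _); apply: eq_bigr => i il; rewrite (negPf il).
Qed.

Lemma prod_s l j :
  \prod_i s l j i = if l == j then second_moment (P j) - mean (P j)
                    else mean (P l) * mean (P j).
Proof.
rewrite (bigD1 l) //= /s eqxx; case: eqP => [<-|/eqP lj].
  rewrite big1 ?mulr1 // => i il; by rewrite (negPf il).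
rewrite (bigD1 j) 1?eq_sym //= eqxx (negPf lj) big1 ?mulr1 //.
by move=> i /andP[il ij]; rewrite (negPf il) (negPf ij).
Qed.

Hypothesis P0 : forall j k, 0 <= P j k.
Hypothesis P1 : forall j, (\esum_(k in [set: nat]) (P j k)%:E = 1)%E.
Hypothesis Pm : forall j, (\esum_(k in [set: nat]) ((k%:R * P j k)%R)%:E < +oo)%E.
Hypothesis Ps : forall j, (\esum_(k in [set: nat]) ((k%:R ^+ 2 * P j k)%R)%:E < +oo)%E.

Lemma esum_g l j i : (\esum_(x in [set: nat]) (g l j i x)%:E)%E = (s l j i)%:E.
Proof.
rewrite /g /s; case: (i == l); case: (i == j).
- exact: shift2.
- under eq_esum do rewrite mulr1. exact: shift1.
- under eq_esum do rewrite mulrC. exact: meanE.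
- under eq_esum do rewrite mulr1. exact: P1.
Qed.

Lemma g_ge0 l j i x : 0 <= g l j i x.
Proof. by rewrite /g; case: (i == l); case: (i == j); rewrite ?mulr1 ?mulr_ge0. Qed.

End Main.
Arguments g {R n}.
Arguments s {R n}.

Theorem theorem1p2 (R : realType) (n : nat) (P : 'I_n -> nat -> R)
    (T : 'I_n -> R) (Q : R) :
  (0 < n)%N ->
  (forall j k, (0 <= P j k)%R) ->
  (forall j, \esum_(k in [set: nat]) (P j k)%:E = 1%E) ->
  (forall j, \esum_(k in [set: nat]) ((k%:R * P j k)%R)%:E < +oo) ->
  (forall j, \esum_(k in [set: nat]) ((k%:R ^+ 2 * P j k)%R)%:E < +oo) ->
  (0 < \sum_(l < n) mean (P l))%R ->
  (forall j, 0 <= T j <= 1)%R ->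
  (0 <= Q <= 1)%R ->
  R0 P T Q =
  ((1 - Q) * \sum_(j < n) T j *
     (mean (P j) * (1 - 1 / \sum_(l < n) mean (P l))
      + stdev (P j) ^+ 2 / \sum_(l < n) mean (P l)))%R%:E.
Proof.
move=> n0 P0 P1 Pm Ps S0 T01 Q01.
set S := (\sum_(l < n) mean (P l))%R.
have Q1 : (0 <= 1 - Q)%R by case/andP: Q01 => _ ?; rewrite subr_ge0.
pose c (j : 'I_n) := ((1 - Q) / S * T j)%R.
have c0 j : (0 <= c j)%R.
  have [T0 _] := andP (T01 j).
  by rewrite /c !mulr_ge0 // invr_ge0 ltW.
have pw k : ((ramif P k * infected T Q k)%R)%:E =
    \sum_(l < n) \sum_(j < n) ((c j * \prod_i g P l j i (k i))%R)%:E.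
  under eq_bigr do rewrite sumEFin.
  rewrite sumEFin; congr EFin.
  rewrite infectedE /ramif -/S.
  rewrite [RHS](eq_bigr (fun l => \sum_(j<n) c j * (((k l).+1%:R * P l (k l).+1 *
     \prod_(i < n | i != l) P i (k i)) * (k j)%:R)))%R; last first.
    by move=> l _; apply: eq_bigr => j _; rewrite prod_g.
  rewrite !mulr_suml; apply: eq_bigr => l _; rewrite !mulr_sumr; apply: eq_bigr => j _.
  rewrite /c; ring.
rewrite /R0 (eq_esum (fun k _ => pw k)).
rewrite esum_sum; last first.
  move=> k l _ _; apply: sume_ge0 => j _; rewrite lee_fin mulr_ge0 // prodr_ge0 // => *.
  exact: g_ge0.
rewrite (eq_bigr (fun l => \sum_(j < n) ((c j * \prod_i s P l j i)%R)%:E)); last first.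
  move=> l _; rewrite esum_sum; last first.
    move=> k j _ _; rewrite lee_fin mulr_ge0 // prodr_ge0 // => *; exact: g_ge0.
  apply: eq_bigr => j _.
  under eq_esum do rewrite EFinM.
  rewrite esumZl //; last by move=> *; rewrite lee_fin prodr_ge0 // => *; exact: g_ge0.
  rewrite (@esum_prod R n (g P l j) (s P l j)) ?EFinM //.
  - by move=> *; exact: g_ge0.
  - by move=> i; exact: esum_g.
under eq_bigr do rewrite sumEFin.
rewrite sumEFin; congr EFin.
under eq_bigr => l _ do under eq_bigr => j _ do rewrite prod_s.
rewrite exchange_big /= mulr_sumr; apply: eq_bigr => j _.
rewrite (bigD1 j) //= eqxx.
rewrite (eq_bigr (fun l => c j * mean (P j) * mean (P l))%R); last first.
  by move=> l lj; rewrite (negPf lj); ring.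
rewrite -mulr_sumr.
have SE : S = (mean (P j) + \sum_(l < n | l != j) mean (P l))%R by rewrite /S (bigD1 j).
have -> : (\sum_(l < n | l != j) mean (P l) = S - mean (P j))%R by rewrite SE; ring.
rewrite /stdev sqr_sqrtr; last exact: var_ge0.
rewrite /c; field; exact: lt0r_neq0.
Qed.
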